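(* Let $x_1,\dots,x_n$ be fixed data points and let $s$ be a real-valued function of $n$ arguments that is symmetric under permutations of its arguments. Let $I_1,\dots,I_n$ be i.i.d. uniform on $\{1,\dots,n\}$ (a bootstrap resample), set $X_i^*=x_{I_i}$, $s^*=s(X_1^*,\dots,X_n^* )$ and $w_j^*=\#\{i: I_i=j\}$ for $j=1,\dots,n$. Write $\mathbb{E}_*,\mathrm{Var}_*,\mathrm{Cov}_*$ for expectation, variance and covariance with respect to this resampling distribution, and let $e_j=\mathbb{E}_*[s^*\mid I_1=j]$ and $s_0=\mathbb{E}_*[s^*]$. Let $l^*$ be the orthogonal projection (in $L^2$ of the resampling distribution) of $s^*-s_0$ onto the linear span of $w_1^*,\dots,w_n^*$. Then: (1) $\mathbb{E}_*[s^*w_j^*]=e_j$ for every $j$; (2) $l^*=\sum_{j=1}^n w_j^*\beta_j$ with $\beta_j=e_j-s_0$; (3) $\mathrm{Var}_*(l^* )=\mathrm{JK}_\mathrm{B}=\mathrm{IJ}_\mathrm{B}$, where $\mathrm{JK}_\mathrm{B}=\sum_{j=1}^n(e_j-s_0)^2$ and $\mathrm{IJ}_\mathrm{B}=\sum_{j=1}^n\mathrm{Cov}_*^2(s^*,w_j^* )$.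
   Context: The bootstrap resample is drawn conditionally on the data, so all starred quantities are computed with $x_1,\dots,x_n$ held fixed; $w^*=(w_1^*,\dots,w_n^* )$ is Multinomial$(n;1/n,\dots,1/n)$. *)

(* Defs.v *)
From mathcomp Require Import all_boot all_order all_algebra all_fingroup.
Set Implicit Arguments. Unset Strict Implicit. Unset Printing Implicit Defensive.
Import Order.TTheory GRing.Theory Num.Theory.
Local Open Scope ring_scope.

(* Outcomes of a bootstrap resample: I = (I_1,...,I_n), indices 0-based in 'I_n.
   The resampling distribution is uniform on all n^n such functions
   (i.e. I_1,...,I_n i.i.d. uniform on {1..n}). *)
Definition Omega (n : nat) := {ffun 'I_n -> 'I_n}.

Section Boot.
Variables (R : realFieldType) (n : nat).

Definition Estar (f : Omega n -> R) : R :=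
  (#|{: Omega n}|%:R)^-1 * \sum_(I : Omega n) f I.

Definition Covstar (f g : Omega n -> R) : R :=
  Estar (fun I => f I * g I) - Estar f * Estar g.

Definition Varstar (f : Omega n -> R) : R := Covstar f f.

Definition Econd (A : {set Omega n}) (f : Omega n -> R) : R :=
  (\sum_(I in A) f I) / #|A|%:R.

Definition wstar (j : 'I_n) (I : Omega n) : R := #|[set i | I i == j]|%:R.

Definition in_span_w (l : Omega n -> R) : Prop :=
  exists c : 'I_n -> R, forall I, l I = \sum_(j < n) c j * wstar j I.

Definition is_orth_proj_w (f l : Omega n -> R) : Prop :=
  in_span_w l /\ forall j : 'I_n, Estar (fun I => (f I - l I) * wstar j I) = 0.

End Boot.

Definition symmetric_fun (T : Type) (R : Type) (n : nat)
  (s : {ffun 'I_n -> T} -> R) : Prop :=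
  forall (sigma : 'S_n) (v : {ffun 'I_n -> T}), s [ffun i => v (sigma i)] = s v.

(* Main.v *)
Require Import Defs.
From mathcomp Require Import all_boot all_order all_algebra all_fingroup.
From mathcomp Require Import ring.
Import Order.TTheory GRing.Theory Num.Theory.
Local Open Scope ring_scope.
Set Implicit Arguments. Unset Strict Implicit. Unset Printing Implicit Defensive.

Section H.
Variables (R : realFieldType) (n : nat).
Hypothesis hn : (0 < n)%N.

Local Notation N := (#|{: Omega n}|%:R : R).
Local Notation ind I i j := (((I : Omega n) i == j)%:R : R).

Lemma N_neq0 : N != 0.
Proof. by rewrite pnatr_eq0 card_ffun !card_ord -lt0n expn_gt0 hn. Qed.

Lemma n_neq0 : (n%:R : R) != 0.
Proof. by rewrite pnatr_eq0 -lt0n. Qed.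

Lemma wstarE j I : wstar R j I = \sum_i ind I i j.
Proof.
rewrite /wstar -sum1_card natr_sum big_mkcond /=; apply: eq_bigr => i _.
by rewrite inE; case: eqP.
Qed.

Lemma sum_ind1 (T : finType) (j : T) : \sum_(v : T) ((v == j)%:R : R) = 1.
Proof.
by rewrite (bigD1 j) //= eqxx big1 ?addr0 // => v /negbTE ->.
Qed.

Lemma sum_ind1' (T : finType) (j : T) : \sum_(v : T) ((j == v)%:R : R) = 1.
Proof.
rewrite (eq_bigr (fun v => ((v == j)%:R : R))) ?sum_ind1 // => v _.
by rewrite eq_sym.
Qed.

Lemma sum_prod (F : 'I_n -> 'I_n -> R) :
  \sum_(I : Omega n) \prod_m F m (I m) = \prod_m \sum_v F m v.
Proof. by rewrite bigA_distr_bigA. Qed.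

Definition Q1 (i : 'I_n) : R := \prod_m (if m == i then 1 else n%:R).
Definition Q2 (i i' : 'I_n) : R :=
  \prod_m (if m == i then 1 else if m == i' then 1 else n%:R).

Lemma L1 i j : \sum_(I : Omega n) ind I i j = Q1 i.
Proof.
pose F := fun m v => if m == i then ((v == j)%:R : R) else 1.
transitivity (\sum_(I : Omega n) \prod_m F m (I m)).
  apply: eq_bigr => I _ /=; by rewrite /F -big_mkcond big_pred1_eq.
etransitivity; first exact: (sum_prod F). rewrite /F.
apply: eq_bigr => m _ /=; case: eqP => _.
  exact: sum_ind1.
by rewrite sumr_const card_ord.
Qed.

Lemma L2 i i' j k : i != i' ->
  \sum_(I : Omega n) ind I i j * ind I i' k = Q2 i i'.
Proof.
move=> nii.
pose F := fun m v => if m == i then ((v == j)%:R : R) else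
      if m == i' then ((v == k)%:R : R) else 1.
transitivity (\sum_(I : Omega n) \prod_m F m (I m)).
  apply: eq_bigr => I _ /=; rewrite /F.
  rewrite (bigD1 i) //= eqxx (bigD1 i') /=; last by rewrite eq_sym.
  rewrite [i' == i]eq_sym (negbTE nii) eqxx big1 ?mulr1 // => m /andP[/negbTE -> /negbTE ->].
  by [].
etransitivity; first exact: (sum_prod F). rewrite /F.
apply: eq_bigr => m _ /=; case: eqP => _.
  exact: sum_ind1.
case: eqP => _; first exact: sum_ind1.
by rewrite sumr_const card_ord.
Qed.

Lemma Q1E i : Q1 i * n%:R = N.
Proof.
have -> : N = \sum_(I : Omega n) \sum_j ind I i j.
  rewrite (eq_bigr (fun _ => 1)); last by move=> I _; apply: sum_ind1'.
  by rewrite sumr_const.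
rewrite exchange_big /=.
rewrite (eq_bigr (fun _ => Q1 i)); last by move=> j _; apply: L1.
by rewrite sumr_const card_ord mulr_natr.
Qed.

Lemma Q2E i i' : i != i' -> Q2 i i' * n%:R = Q1 i.
Proof.
move=> nii.
have j : 'I_n := i.
rewrite -(L1 i j).
rewrite (eq_bigr (fun I => \sum_k ind I i j * ind I i' k)); last first.
  by move=> I _; rewrite -mulr_sumr sum_ind1' mulr1.
rewrite exchange_big /=.
rewrite (eq_bigr (fun _ => Q2 i i')); last by move=> k _; apply: L2.
by rewrite sumr_const card_ord mulr_natr.
Qed.


Lemma Estar_ext (f g : Omega n -> R) : (forall I, f I = g I) -> Estar f = Estar g.
Proof. by move=> fg; rewrite /Estar; congr (_ * _); apply: eq_bigr => I _. Qed.

Lemma Estar_sum (F : 'I_n -> Omega n -> R) :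
  Estar (fun I => \sum_j F j I) = \sum_j Estar (F j).
Proof. by rewrite /Estar exchange_big mulr_sumr. Qed.

Lemma EstarZ a (f : Omega n -> R) : Estar (fun I => a * f I) = a * Estar f.
Proof. by rewrite /Estar -mulr_sumr mulrCA. Qed.

Lemma EstarZr a (f : Omega n -> R) : Estar (fun I => f I * a) = Estar f * a.
Proof. by rewrite /Estar -mulr_suml mulrA. Qed.

Lemma EstarB (f g : Omega n -> R) : Estar (fun I => f I - g I) = Estar f - Estar g.
Proof. by rewrite /Estar sumrB mulrBr. Qed.

Lemma Estar_cst (a : R) : Estar (fun _ : Omega n => a) = a.
Proof.
rewrite /Estar sumr_const -[a *+ _]mulr_natr mulrC -mulrA mulfV ?mulr1 //.
exact: N_neq0.
Qed.

Lemma Q1v i : Q1 i = N / n%:R.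
Proof. by rewrite -(Q1E i) mulfK // n_neq0. Qed.

Lemma Q2v i i' : i != i' -> Q2 i i' = N / n%:R / n%:R.
Proof. by move=> h; rewrite -(Q1v i) -(Q2E h) mulfK // n_neq0. Qed.

Lemma Ew (j : 'I_n) : Estar (wstar R j) = 1.
Proof.
rewrite (Estar_ext (g := fun I => \sum_i ind I i j)); last by move=> I; exact: wstarE.
rewrite /Estar exchange_big /=.
rewrite (eq_bigr (fun _ => N / n%:R)); last by move=> i _; rewrite L1 Q1v.
rewrite sumr_const card_ord -[_ *+ n]mulr_natr divfK ?n_neq0 // mulVf //.
exact: N_neq0.
Qed.

Lemma ind_mul (I : Omega n) i j k : ind I i j * ind I i k = (j == k)%:R * ind I i j.
Proof.
by have [->|_] := eqVneq (I i) j; rewrite ?mul1r ?mulr1 ?mul0r ?mulr0.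
Qed.

Lemma Eww (j k : 'I_n) : Estar (fun I => wstar R j I * wstar R k I) =
  (j == k)%:R + (1 - n%:R^-1).
Proof.
rewrite (Estar_ext (g := fun I => \sum_i \sum_i' ind I i j * ind I i' k)); last first.
  by move=> I; rewrite !wstarE mulr_suml; apply: eq_bigr => i _; rewrite mulr_sumr.
rewrite /Estar exchange_big /=.
rewrite (eq_bigr (fun _ => (j == k)%:R * (N / n%:R) + (n%:R - 1) * (N / n%:R / n%:R)));
  last first.
  move=> i _; rewrite exchange_big /= (bigD1 i) //=.
  rewrite (eq_bigr (fun I => (j == k)%:R * ind I i j)); last by move=> I _; rewrite ind_mul.
  rewrite -mulr_sumr L1 Q1v; congr (_ + _).
  rewrite (eq_bigr (fun _ => N / n%:R / n%:R)); last first.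
    by move=> i' ii'; rewrite L2 1?eq_sym // Q2v // eq_sym.
  set c := N / n%:R / n%:R.
  have -> : \sum_(i' < n | i' != i) c = \sum_(i' < n) c - c.
    by rewrite [X in _ = X - _](bigD1 i) //= addrC addrK.
  by rewrite sumr_const card_ord mulrBl mul1r mulr_natl.
rewrite sumr_const card_ord -[_ *+ n]mulr_natr.
have := N_neq0; have := n_neq0.
set M := (#|{: Omega n}|%:R : R); set m := (n%:R : R) => hm hM.
by field; rewrite hm hM.
Qed.


Lemma sym_sum (f : Omega n -> R)
  (hf : forall (sg : 'S_n) (I : Omega n), f [ffun m => I (sg m)] = f I) i i0 j :
  \sum_(I : Omega n) f I * ind I i j = \sum_(I : Omega n) f I * ind I i0 j.
Proof.
pose h := fun I : Omega n => [ffun m => I (tperm i i0 m)].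
have hK : involutive h by move=> I; apply/ffunP => m; rewrite !ffunE tpermK.
rewrite (reindex_inj (inv_inj hK)) /=.
by apply: eq_bigr => I _; rewrite /h hf ffunE tpermL.
Qed.

Lemma Esw (f : Omega n -> R)
  (hf : forall (sg : 'S_n) (I : Omega n), f [ffun m => I (sg m)] = f I) (i0 j : 'I_n) :
  Estar (fun I => f I * wstar R j I) = Econd [set I : Omega n | I i0 == j] f.
Proof.
set T := \sum_(I : Omega n) f I * ind I i0 j.
have hA : \sum_(I in [set I : Omega n | I i0 == j]) f I = T.
  rewrite big_mkcond; apply: eq_bigr => I _; rewrite inE.
  by case: eqP; rewrite ?mulr1 ?mulr0.
have hC : (#|[set I : Omega n | I i0 == j]|%:R : R) = N / n%:R.
  rewrite -sum1_card natr_sum big_mkcond -(Q1v i0) -(L1 i0 j).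
  by apply: eq_bigr => I _; rewrite inE; case: eqP.
rewrite /Econd hA hC /Estar.
rewrite (eq_bigr (fun I => \sum_i f I * ind I i j)); last first.
  by move=> I _; rewrite wstarE mulr_sumr.
rewrite exchange_big /=.
rewrite (eq_bigr (fun _ => T)); last by move=> i _; rewrite (sym_sum hf i i0).
rewrite sumr_const card_ord -[_ *+ n]mulr_natr.
have := N_neq0; have := n_neq0.
set M := (#|{: Omega n}|%:R : R); set m := (n%:R : R) => hm hM.
by field; rewrite hm hM.
Qed.

End H.

Theorem theorem1 (R : realFieldType) (T : Type) (n : nat) (hn : (0 < n)%N)
  (x : 'I_n -> T) (s : {ffun 'I_n -> T} -> R) (hs : symmetric_fun s) :
  let sstar := fun I : Omega n => s [ffun i => x (I i)] in
  let s0 := Estar sstar in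
  let e := fun j : 'I_n => Econd [set I : Omega n | I (Ordinal hn) == j] sstar in
  let lstar := fun I : Omega n => \sum_(j < n) wstar R j I * (e j - s0) in
  let JK := \sum_(j < n) (e j - s0) ^+ 2 in
  let IJ := \sum_(j < n) (Covstar sstar (wstar R j)) ^+ 2 in
  (* (1) *)
  (forall j : 'I_n, Estar (fun I => sstar I * wstar R j I) = e j) /\
  (* (2): sum_j w_j beta_j is the orthogonal projection of s^* - s0 onto span{w_j}
          (and it is the unique one) *)
  (is_orth_proj_w (fun I => sstar I - s0) lstar /\
   forall l : Omega n -> R, is_orth_proj_w (fun I => sstar I - s0) l ->
     forall I, l I = lstar I) /\
  (* (3) *)
  Varstar lstar = JK /\ JK = IJ.
Proof.
move=> sstar s0 e lstar JK IJ.
have hf : forall (sg : 'S_n) (I : Omega n), sstar [ffun m => I (sg m)] = sstar I.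
  move=> sg I; rewrite /sstar -(hs sg [ffun i => x (I i)]); congr s.
  by apply/ffunP => m; rewrite !ffunE.
have Esw' : forall j, Estar (fun I => sstar I * wstar R j I) = e j.
  by move=> j; rewrite (Esw hn hf (Ordinal hn) j).
have nz := n_neq0 R hn.
set c := 1 - (n%:R : R)^-1.
have Elin : forall (d : 'I_n -> R) k,
    Estar (fun I => (\sum_j d j * wstar R j I) * wstar R k I) = d k + c * \sum_j d j.
  move=> d k.
  rewrite (Estar_ext (g := fun I => \sum_j d j * (wstar R j I * wstar R k I))); last first.
    by move=> I; rewrite mulr_suml; apply: eq_bigr => j _; rewrite mulrA.
  rewrite Estar_sum.
  rewrite (eq_bigr (fun j => d j * (j == k)%:R + c * d j)); last first.
    by move=> j _; rewrite EstarZ (Eww R hn) -/c; ring.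
  rewrite big_split /= -mulr_sumr; congr (_ + _).
  by rewrite (bigD1 k) //= eqxx mulr1 big1 ?addr0 // => j /negbTE ->; rewrite mulr0.
have sum_w : forall I : Omega n, \sum_j wstar R j I = n%:R.
  move=> I; rewrite (eq_bigr (fun j => \sum_i ((I i == j)%:R : R))); last first.
    by move=> j _; rewrite wstarE.
  rewrite exchange_big /= (eq_bigr (fun _ => 1)) ?sumr_const ?card_ord // => i _.
  exact: sum_ind1'.
have sum_e : \sum_j (e j - s0) = 0.
  rewrite sumrB (eq_bigr _ (fun j _ => esym (Esw' j))) -Estar_sum.
  rewrite (Estar_ext (g := fun I => sstar I * n%:R)); last first.
    by move=> I; rewrite -mulr_sumr sum_w.
  by rewrite EstarZr sumr_const card_ord mulr_natr subrr.
have Ef : forall k, Estar (fun I => (sstar I - s0) * wstar R k I) = e k - s0.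
  move=> k; rewrite (Estar_ext (g := fun I => sstar I * wstar R k I - s0 * wstar R k I)).
    by rewrite EstarB EstarZ Ew // mulr1 Esw'.
  by move=> I; rewrite mulrBl.
have Elstar : forall k, Estar (fun I => lstar I * wstar R k I) = e k - s0.
  move=> k; rewrite (Estar_ext (g := fun I =>
     (\sum_j (e j - s0) * wstar R j I) * wstar R k I)); last first.
    by move=> I; congr (_ * _); apply: eq_bigr => j _; rewrite mulrC.
  by rewrite Elin sum_e mulr0 addr0.
split; first exact: Esw'.
split; first split.
- split.
    by exists (fun j => e j - s0) => I; apply: eq_bigr => j _; rewrite mulrC.
  move=> k.
  rewrite (Estar_ext (g := fun I => (sstar I - s0) * wstar R k I - lstar I * wstar R k I)).
    by rewrite EstarB Ef Elstar subrr.
  by move=> I; rewrite mulrBl.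
- move=> l [[cf Hl] Horth] I.
  have hk : forall k, e k - s0 = cf k + c * \sum_j cf j.
    move=> k; have := Horth k.
    rewrite (Estar_ext (g := fun I => (sstar I - s0) * wstar R k I -
        (\sum_j cf j * wstar R j I) * wstar R k I)); last first.
      by move=> J; rewrite Hl mulrBl.
    by rewrite EstarB Ef Elin => /eqP; rewrite subr_eq0 => /eqP.
  have hS : \sum_j cf j = 0.
    have := sum_e; rewrite (eq_bigr _ (fun k _ => hk k)) big_split /=.
    rewrite sumr_const card_ord -[_ *+ n]mulr_natr.
    set S := \sum_j cf j => h.
    have : S * n%:R = 0.
      by rewrite -h /c; field.
    by move/eqP; rewrite mulf_eq0 (negbTE nz) orbF => /eqP.
  rewrite Hl; apply: eq_bigr => j _.
  by rewrite mulrC -[cf j]addr0 -(mulr0 c) -hS -hk.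
- split.
  + rewrite /Varstar /Covstar.
    have -> : Estar lstar = 0.
      rewrite (Estar_ext (g := fun I => \sum_j wstar R j I * (e j - s0))) //.
      rewrite Estar_sum -[RHS]sum_e; apply: eq_bigr => j _.
      by rewrite EstarZr Ew // mul1r.
    rewrite mulr0 subr0.
    rewrite (Estar_ext (g := fun I => \sum_k (e k - s0) * (lstar I * wstar R k I))); last first.
      move=> I; rewrite {2}/lstar mulr_sumr; apply: eq_bigr => k _.
      by rewrite mulrA mulrC.
    rewrite Estar_sum /JK; apply: eq_bigr => k _.
    by rewrite EstarZ Elstar expr2.
  + rewrite /JK /IJ; apply: eq_bigr => j _.
    by rewrite /Covstar Esw' Ew // mulr1.
Qed.
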